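(* Let $d/2<k<d$ be integers. For all $t>0$, $g(t)\big(t\,g''(t)+g'(t)\big)>t\,(g'(t))^2$; consequently the function $t\mapsto t g'(t)/g(t)$ is strictly increasing on $(0,\infty)$.
   Context: $g(t)=\binom dk^{-1}\sum_{j=0}^{d-k}\binom kj\binom{d-k}{j}t^j$. *)

(* Defs.v *)
From HB Require Import structures.
From mathcomp Require Import all_boot all_order all_algebra.
Set Implicit Arguments. Unset Strict Implicit. Unset Printing Implicit Defensive.
Import Order.TTheory GRing.Theory Num.Theory.
Local Open Scope ring_scope.

(* g(t) = C(d,k)^{-1} * sum_{j=0}^{d-k} C(k,j) C(d-k,j) t^j, as a polynomial
   over a real field R.  Its derivatives g', g'' are the (formal = analytic)
   polynomial derivatives. *)
Definition gpoly (R : fieldType) (d k : nat) : {poly R} :=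
  (('C(d, k))%:R)^-1 *:
    \sum_(j < (d - k).+1) (('C(k, j) * 'C(d - k, j))%:R *: 'X^j).

(* Main.v *)
Require Import Defs.
From HB Require Import structures.
From mathcomp Require Import all_boot all_order all_algebra.
From mathcomp Require Import ring lra zify.
Import Order.TTheory GRing.Theory Num.Theory.
Local Open Scope ring_scope.

Definition P {R : realFieldType} (n : nat) (c : nat -> R) : {poly R} := \sum_(j < n) c j *: 'X^j.

Lemma hornerP {R : realFieldType} n (c : nat -> R) (t : R) : (P n c).[t] = \sum_(j < n) c j * t ^+ j.
Proof. rewrite /P horner_sum; apply: eq_bigr => j _; by rewrite hornerZ hornerXn. Qed.

Lemma derivnP {R : realFieldType} n (c : nat -> R) m (t : R) : t ^+ m * ((P n c)^`(m)).[t] = \sum_(j < n) c j * t ^+ j *+ j ^_ m.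
Proof.
rewrite /P raddf_sum horner_sum mulr_sumr; apply: eq_bigr => j _ /=.

rewrite derivnZ derivnXn hornerZ hornerMn hornerXn.
case: (leqP m j) => hm.
  have -> : t ^+ j = t ^+ m * t ^+ (j - m) by rewrite -exprD subnKC.
  by rewrite !mulrnAr mulrCA.
by rewrite ffact_small // !mulr0n !mulr0.
Qed.

Lemma sym_pos {R : realFieldType} n (F : nat -> nat -> R) i0 j0 : (i0 < n)%N -> (j0 < n)%N ->
  (forall i j, (i < n)%N -> (j < n)%N -> 0 <= F i j + F j i) ->
  0 < F i0 j0 + F j0 i0 -> 0 < \sum_(i < n) \sum_(j < n) F i j.
Proof.
move=> hi hj hge hgt.
suff: 0 < \sum_(i < n) \sum_(j < n) (F i j + F j i).
  rewrite (eq_bigr (fun i : 'I_n => \sum_(j < n) F i j + \sum_(j < n) F j i)); last first.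
    by move=> i _; rewrite big_split.
  rewrite big_split /= [X in _ + X]exchange_big /=.
  lra.
rewrite (bigD1 (Ordinal hi)) //= (bigD1 (Ordinal hj)) //=.
rewrite -addrA ltr_pwDl //; last first.
  apply: addr_ge0; apply: sumr_ge0 => i _; last by apply: sumr_ge0 => j _; exact: hge.
  exact: hge.
Qed.

Lemma sqr_pos {R : realFieldType} (a : R) : a != 0 -> 0 < a ^+ 2.
Proof. by move=> ha; rewrite lt0r sqr_ge0 andbT expf_eq0 /= (negbTE ha). Qed.

Lemma cs {R : realFieldType} n (x w : nat -> R) i0 j0 : (i0 < n)%N -> (j0 < n)%N ->
  (forall j, (j < n)%N -> 0 <= x j) -> 0 < x i0 -> 0 < x j0 -> w i0 != w j0 ->
  (\sum_(j < n) x j * w j) ^+ 2 < (\sum_(j < n) x j) * (\sum_(j < n) x j * w j ^+ 2).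
Proof.
move=> hi hj hx hxi hxj hw; rewrite -subr_gt0.
have -> : (\sum_(j < n) x j) * (\sum_(j < n) x j * w j ^+ 2) - (\sum_(j < n) x j * w j) ^+ 2
   = \sum_(i < n) \sum_(j < n) (x i * x j * (w j ^+ 2 - w i * w j)).
  rewrite expr2 !mulr_suml -sumrB; apply: eq_bigr => i _.
  rewrite !mulr_sumr -sumrB; apply: eq_bigr => j _; ring.
apply: (@sym_pos _ n (fun i j => x i * x j * (w j ^+ 2 - w i * w j)) _ _ hi hj).
  move=> i j hi' hj'.
  have -> : x i * x j * (w j ^+ 2 - w i * w j) + x j * x i * (w i ^+ 2 - w j * w i)
     = x i * x j * (w i - w j) ^+ 2 by ring.
  by apply: mulr_ge0; [apply: mulr_ge0; exact: hx | exact: sqr_ge0].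
have -> : x i0 * x j0 * (w j0 ^+ 2 - w i0 * w j0) + x j0 * x i0 * (w i0 ^+ 2 - w j0 * w i0)
     = x i0 * x j0 * (w i0 - w j0) ^+ 2 by ring.
apply: mulr_gt0; [exact: mulr_gt0 | apply: sqr_pos; by rewrite subr_eq0].
Qed.

Lemma powdiff {R : realFieldType} (s t : R) i j : 0 <= s -> s <= t -> (i <= j)%N ->
  0 <= t ^+ j * s ^+ i - s ^+ j * t ^+ i.
Proof.
move=> hs hst hij.
have ht : 0 <= t by apply: le_trans hst.
rewrite -(subnKC hij) !exprD subr_ge0.
have -> : s ^+ i * s ^+ (j - i) * t ^+ i = (s ^+ i * t ^+ i) * s ^+ (j - i) by ring.
have -> : t ^+ i * t ^+ (j - i) * s ^+ i = (s ^+ i * t ^+ i) * t ^+ (j - i) by ring.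
apply: ler_wpM2l; first by rewrite mulr_ge0 // exprn_ge0.
by rewrite lerXn2r // nnegrE.
Qed.

Lemma mono {R : realFieldType} n (c : nat -> R) s t : 0 < s -> s < t -> (1 < n)%N ->
  (forall j, (j < n)%N -> 0 <= c j) -> 0 < c 0%N -> 0 < c 1%N ->
  (\sum_(j < n) c j * s ^+ j * j%:R) * (\sum_(j < n) c j * t ^+ j)
  < (\sum_(j < n) c j * t ^+ j * j%:R) * (\sum_(j < n) c j * s ^+ j).
Proof.
move=> hs hst hn hc hc0 hc1; rewrite -subr_gt0.
have -> : (\sum_(j < n) c j * t ^+ j * j%:R) * (\sum_(j < n) c j * s ^+ j)
  - (\sum_(j < n) c j * s ^+ j * j%:R) * (\sum_(j < n) c j * t ^+ j)
   = \sum_(i < n) \sum_(j < n) (c i * c j * i%:R * (t ^+ i * s ^+ j - s ^+ i * t ^+ j)).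
  rewrite !mulr_suml -sumrB; apply: eq_bigr => i _.
  rewrite !mulr_sumr -sumrB; apply: eq_bigr => j _; ring.
have h01 : (0 < n)%N by apply: ltn_trans hn.
apply: (@sym_pos _ n (fun i j => c i * c j * i%:R * (t ^+ i * s ^+ j - s ^+ i * t ^+ j)) _ _ hn h01).
  move=> i j hi' hj'.
  have -> : c i * c j * i%:R * (t ^+ i * s ^+ j - s ^+ i * t ^+ j)
      + c j * c i * j%:R * (t ^+ j * s ^+ i - s ^+ j * t ^+ i)
     = c i * c j * ((i%:R - j%:R) * (t ^+ i * s ^+ j - s ^+ i * t ^+ j)) by ring.
  apply: mulr_ge0; first by apply: mulr_ge0; apply: hc.
  have hs0 : 0 <= s by apply: ltW.
  case: (leqP j i) => hij.
    apply: mulr_ge0; first by rewrite subr_ge0 ler_nat.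
    by apply: powdiff => //; exact: ltW.
  have -> : (i%:R - j%:R) * (t ^+ i * s ^+ j - s ^+ i * t ^+ j)
    = (j%:R - i%:R) * (t ^+ j * s ^+ i - s ^+ j * t ^+ i) :> R by ring.
  apply: mulr_ge0; first by rewrite subr_ge0 ler_nat ltnW.
  by apply: powdiff => //; [exact: ltW | exact: ltnW].
rewrite /= !expr0 !expr1 !mulr0 !mul0r !addr0 !mulr1.
by apply: mulr_gt0; [exact: mulr_gt0 | rewrite subr_gt0].
Qed.

Lemma nat_sq j : (j ^_ 2 + j ^_ 1)%N = (j * j)%N.
Proof. case: j => [|j] //; rewrite ffactSS !ffactn1; lia. Qed.

Theorem lemma16 (R : realFieldType) (d k : nat) :
  (d < 2 * k)%N -> (k < d)%N ->
  (forall t : R, 0 < t ->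
     (gpoly R d k).[t] * (t * (gpoly R d k)^`(2).[t] + (gpoly R d k)^`().[t])
       > t * ((gpoly R d k)^`().[t]) ^+ 2)
  /\
  (forall s t : R, 0 < s -> s < t ->
     s * (gpoly R d k)^`().[s] / (gpoly R d k).[s]
       < t * (gpoly R d k)^`().[t] / (gpoly R d k).[t]).
Proof.
move=> hdk hkd.
set m := (d - k)%N.
have hm1 : (1 <= m)%N by rewrite /m subn_gt0.
have hmk : (m < k)%N by rewrite /m; lia.
set c : nat -> R := fun j => ('C(d, k))%:R^-1 * ('C(k, j) * 'C(m, j))%:R.
have hg : gpoly R d k = P m.+1 c.
  rewrite /gpoly /P scaler_sumr; apply: eq_bigr => j _; by rewrite scalerA.
have hCpos : 0 < ('C(d, k))%:R^-1 :> R by rewrite invr_gt0 ltr0n bin_gt0 ltnW.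
have hc : forall j, 0 <= c j.
  by move=> j; rewrite /c mulr_ge0 // ltW.
have hc0 : 0 < c 0%N by rewrite /c !bin0 mulr1.
have hc1 : 0 < c 1%N.
  rewrite /c !bin1 mulr_gt0 // ltr0n muln_gt0; apply/andP; split => //.
  by apply: leq_trans hmk.
have hn : (1 < m.+1)%N by [].
have hA : forall t : R, 0 < t -> 0 < \sum_(j < m.+1) c j * t ^+ j.
  move=> t ht; rewrite big_ord_recl /= expr0 mulr1 ltr_pwDl //.
  by apply: sumr_ge0 => j _; apply: mulr_ge0; [apply: hc | apply: exprn_ge0; exact: ltW].
have hB : forall t : R, t * (gpoly R d k)^`().[t] = \sum_(j < m.+1) c j * t ^+ j * j%:R.
  move=> t; rewrite hg -derivn1 -[t in t * _]expr1 derivnP.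
  by apply: eq_bigr => j _; rewrite ffactn1 mulr_natr.
have hG : forall t : R, (gpoly R d k).[t] = \sum_(j < m.+1) c j * t ^+ j.
  by move=> t; rewrite hg hornerP.
split.
  move=> t ht.
  rewrite -(ltr_pM2l ht).
  have -> : t * (t * (gpoly R d k)^`().[t] ^+ 2) = (t * (gpoly R d k)^`().[t]) ^+ 2 by ring.
  have -> : t * ((gpoly R d k).[t] * (t * (gpoly R d k)^`(2).[t] + (gpoly R d k)^`().[t]))
     = (gpoly R d k).[t] * (t ^+ 2 * (gpoly R d k)^`(2).[t] + t * (gpoly R d k)^`().[t]) by ring.
  have -> : t ^+ 2 * (gpoly R d k)^`(2).[t] + t * (gpoly R d k)^`().[t]
     = \sum_(j < m.+1) (c j * t ^+ j) * (j%:R) ^+ 2.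
    rewrite hB hg derivnP -big_split /=; apply: eq_bigr => j _.
    by rewrite -mulr_natr -mulrDr -natrD expr2 -natrM -nat_sq ffactn1.
  rewrite hB hG.
  apply: (@cs R m.+1 (fun j => c j * t ^+ j) (fun j => j%:R) 0%N 1%N) => //=.
  - by move=> j hj; apply: mulr_ge0; [apply: hc | apply: exprn_ge0; exact: ltW].
  - by rewrite expr0 mulr1.
  - by rewrite expr1 mulr_gt0.
  - by rewrite eqr_nat.
move=> s t hs hst.
have ht : 0 < t by apply: lt_trans hst.
rewrite ltr_pdivrMr ?hA // -?hG; last by rewrite hG hA.
rewrite mulrAC ltr_pdivlMr; last by rewrite hG hA.
rewrite hB hB !hG.
by apply: mono => // j _; apply: hc.
Qed.
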